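(* Let $H$ be an NCI-hypergraph and let $e=\{x_1,\dots,x_n\}$ be a hyperedge of $H$. Then $N(x_1)=N(x_2)=\dots=N(x_n)$.
   Context: A simple hypergraph is a pair $H=(V,E)$, $V$ finite, $E\subseteq 2^V$, assumed minimal (no edge properly contains another); $2$-element edges are called edges and $k$-edges with $k\ge 3$ are called hyperedges. For $v\in V$, $N(v)=\{w:\{v,w\}\in E\}$ is its set of $2$-neighbors. The edge ideal $I(H)$ is the squarefree monomial ideal in $k[V]$ ($k$ a field) generated by $\prod_{v\in e}v$, $e\in E$. A nearly complete intersection is a squarefree monomial ideal $I$ that is not a complete intersection such that for every variable $x$ in the support of $I$, $I(x=1)$ (substituting $x=1$ in the generators) is a complete intersection. $H$ is an NCI-hypergraph if $I(H)$ is a nearly complete intersection. *)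

(* Defs.v *)
From mathcomp Require Import all_boot.
Set Implicit Arguments. Unset Strict Implicit. Unset Printing Implicit Defensive.

(* Squarefree monomials in k[V] are identified with their supports (finite
   subsets of V); a squarefree monomial ideal is given by a finite set of
   monomial generators G : {set {set V}}.  Divisibility of squarefree
   monomials is inclusion of supports. *)

Section Hyper.
Variable V : finType.

Definition simple_hypergraph (E : {set {set V}}) : Prop :=
  forall e f, e \in E -> f \in E -> ~~ (e \proper f).

Definition nbhd (E : {set {set V}}) (v : V) : {set V} :=
  [set w | (w != v) && ([set v; w] \in E)].

(* generators of the edge ideal I(H): the monomials prod_{v in e} v *)
Definition edge_ideal_gens (E : {set {set V}}) : {set {set V}} := E.

Definition mingens (G : {set {set V}}) : {set {set V}} :=
  [set g in G | [forall h in G, ~~ (h \proper g)]].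

Definition ideal_support (G : {set {set V}}) : {set V} :=
  \bigcup_(g in mingens G) g.

(* substituting x = 1 in the generators *)
Definition subst1 (G : {set {set V}}) (x : V) : {set {set V}} :=
  [set g :\ x | g in G].

(* a monomial ideal is a complete intersection iff its minimal monomial
   generators have pairwise disjoint supports *)
Definition complete_intersection (G : {set {set V}}) : Prop :=
  forall g h, g \in mingens G -> h \in mingens G -> g != h -> [disjoint g & h].

Definition nearly_complete_intersection (G : {set {set V}}) : Prop :=
  ~ complete_intersection G /\
  forall x, x \in ideal_support G -> complete_intersection (subst1 G x).

Definition NCI_hypergraph (E : {set {set V}}) : Prop :=
  simple_hypergraph E /\ nearly_complete_intersection (edge_ideal_gens E).

End Hyper.

(* Main.v *)
Require Import Defs.
From mathcomp Require Import all_boot.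

Lemma key (V : finType) (E : {set {set V}}) (e : {set V}) (x y w : V) :
  simple_hypergraph E ->
  (forall z, z \in ideal_support E -> complete_intersection (subst1 E z)) ->
  e \in E -> 3 <= #|e| -> x \in e -> y \in e -> x != y -> w != x ->
  [set x; w] \in E -> (w != y) && ([set y; w] \in E).
Proof.
move=> S CIh eE ce xe ye xy wx xwE.
have sub_e : forall g, g \in E -> g \subset e -> #|g| < #|e| -> False.
  move=> g gE ge cg; move: (S g e gE eE); rewrite properEcard ge cg //.
have sub_e2 : forall g a b, g \in E -> a \in e -> b \in e ->
    g \subset [set a; b] -> False.
  move=> g a b gE ae be gab; apply: (sub_e g gE).
    apply: (subset_trans gab); apply/subsetP => z; rewrite !inE.
    by case/orP => /eqP ->.
  apply: (leq_ltn_trans (subset_leq_card gab)).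
  rewrite cards2; apply: leq_trans ce; by case: (a != b).
have wne : w \notin e.
  apply/negP => we; apply: (sub_e2 _ x w xwE xe we); exact: subxx.
have wy : w != y by apply/negP => /eqP wy; rewrite wy ye in wne.
rewrite wy /=.
case: (boolP ([set y; w] \in E)) => // nyw; exfalso.
have ysupp : y \in ideal_support E.
  rewrite /ideal_support; apply/bigcupP; exists e => //.
  rewrite /mingens inE eE /=; apply/forall_inP => h hE; exact: S.
have CI := CIh y ysupp.
have mem_sub : forall g, g \in E -> g :\ y \in subst1 E y.
  by move=> g gE; apply/imsetP; exists g.
have H1 : e :\ y \in mingens (subst1 E y).
  rewrite inE mem_sub //=; apply/forall_inP => h /imsetP [g gE ->].
  apply/negP => pr.
  have ge : g \subset e.
    apply/subsetP => z zg; case: (eqVneq z y) => [->//|zy].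
    have : z \in g :\ y by rewrite !inE zy zg.
    move/(subsetP (proper_sub pr)); rewrite inE; by case/andP.
  have gne : g != e by apply/eqP => gee; rewrite gee properxx in pr.
  by move: (S g e gE eE); rewrite properEneq gne ge.
have exy : [set x; w] :\ y = [set x; w].
  apply/setP => z; rewrite !inE; case: (eqVneq z y) => [->|] //=.
  by rewrite [y == x]eq_sym [y == w]eq_sym (negbTE xy) (negbTE wy).
have H2 : [set x; w] \in mingens (subst1 E y).
  rewrite inE -{1}exy mem_sub //=; apply/forall_inP => h /imsetP [g gE ->].
  apply/negP => pr.
  have yg : y \in g.
    case: (boolP (y \in g)) => // yg; exfalso; move: (S g _ gE xwE).
    suff -> : g = g :\ y by rewrite pr.
    apply/setP => z; rewrite !inE; case: (eqVneq z y) => [->|] //=.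
    by rewrite (negbTE yg).
  have gsub : forall z, z \in g -> z != y -> (z == x) || (z == w).
    move=> z zg zy; have : z \in g :\ y by rewrite !inE zy zg.
    by move/(subsetP (proper_sub pr)); rewrite !inE.
  case: (boolP (x \in g)) => xg.
    apply: (sub_e2 g x y gE xe ye); apply/subsetP => z zg; rewrite !inE.
    case: (eqVneq z y) => [_|zy]; first by rewrite orbT.
    case/orP: (gsub z zg zy) => [->//|/eqP zw].
    move: pr; rewrite properE => /andP [_ /negP]; case.
    apply/subsetP => t; rewrite !inE => /orP [] /eqP ->.
      by rewrite xg andbT.
    by rewrite -zw zg zy.
  case: (boolP (w \in g)) => wg.
    suff : g = [set y; w] by move=> gyw; rewrite -gyw gE in nyw.
    apply/setP => z; rewrite !inE; apply/idP/idP.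
      move=> zg; case: (eqVneq z y) => //= zy.
      case/orP: (gsub z zg zy) => // /eqP zx; by rewrite -zx zg in xg.
    by case/orP => /eqP ->.
  apply: (sub_e2 g y y gE ye ye); apply/subsetP => z zg; rewrite !inE.
  case: (eqVneq z y) => //= zy.
  case/orP: (gsub z zg zy) => /eqP zx; first by rewrite -zx zg in xg.
  by rewrite -zx zg in wg.
have H3 : e :\ y != [set x; w].
  apply/eqP => eq; have : w \in [set x; w] by rewrite !inE eqxx orbT.
  by rewrite -eq inE (negbTE wne) andbF.
have D := CI _ _ H1 H2 H3.
have xin : x \in e :\ y by rewrite !inE xy xe.
by move: (disjointFr D xin); rewrite !inE eqxx.
Qed.

Theorem lemma3p3 (V : finType) (E : {set {set V}}) (e : {set V}) :
  NCI_hypergraph E -> e \in E -> 3 <= #|e| ->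
  forall x y, x \in e -> y \in e -> nbhd E x = nbhd E y.
Proof.
move=> [S [_ CIh]] eE ce x y xe ye.
rewrite /edge_ideal_gens in CIh.
case: (eqVneq x y) => [->//|xy].
apply/setP => w; rewrite /nbhd !inE; apply/idP/idP => /andP [wx xw].
  exact: (key _ _ e x y w S CIh eE ce xe ye xy wx xw).
by apply: (key _ _ e y x w S CIh eE ce ye xe _ wx xw); rewrite eq_sym.
Qed.
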